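(* Let $A,B\subseteq\mathbb{N}$ with $A\cap B=\emptyset$. Then $$\underline{\underline{d}}(A)+\underline{\underline{d}}(B)\le\underline{\underline{d}}(A\cup B)\le\underline{\underline{d}}(A)+\overline{\overline{d}}(B)\le\overline{\overline{d}}(A\cup B)\le\overline{\overline{d}}(A)+\overline{\overline{d}}(B).$$ If moreover $A\cup B\in\mathcal{D}$, then $d(A\cup B)=\underline{\underline{d}}(A)+\overline{\overline{d}}(B)$. If $A\in\mathcal{D}$ (and $A\cap B=\emptyset$), then $\overline{\overline{d}}(A\cup B)=d(A)+\overline{\overline{d}}(B)$.
   Context: $\mathbb{N}=\{1,2,3,\dots\}$. For $A\subseteq\mathbb{N}$ let $A(n)=|A\cap[1,n]|$. Let $\mathcal{D}$ be the collection of all $A\subseteq\mathbb{N}$ for which the asymptotic density $d(A)=\lim_{n\to\infty}\frac{A(n)}{n}$ exists. Define $\underline{\underline{d}}(A)=\sup\{d(B);\ B\subseteq A,\ B\in\mathcal{D}\}$ and $\overline{\overline{d}}(A)=\inf\{d(C);\ C\supseteq A,\ C\in\mathcal{D}\}$. *)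

(* Defs.v *)
From mathcomp Require Import all_boot all_order all_algebra.
From mathcomp Require Import all_classical all_reals topology normedtype sequences.
Set Implicit Arguments. Unset Strict Implicit. Unset Printing Implicit Defensive.
Import Order.TTheory GRing.Theory Num.Theory numFieldNormedType.Exports.
Local Open Scope classical_set_scope.
Local Open Scope ring_scope.

Definition Acount {R : realType} (A : set nat) (n : nat) : R :=
  \sum_(1 <= k < n.+1) (k \in A)%:R.

Definition dratio {R : realType} (A : set nat) (n : nat) : R :=
  Acount A n / n%:R.

Definition inD (R : realType) (A : set nat) : Prop :=
  cvgn (@dratio R A).

Definition dens {R : realType} (A : set nat) : R := limn (@dratio R A).

Definition ldd {R : realType} (A : set nat) : R :=
  sup [set x : R | exists B : set nat, B `<=` A /\ inD R B /\ x = dens B].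

Definition udd {R : realType} (A : set nat) : R :=
  inf [set x : R | exists C : set nat, A `<=` C /\ inD R C /\ x = dens C].

(* Main.v *)
Require Import Defs.
From mathcomp Require Import all_boot all_order all_algebra.
From mathcomp Require Import all_classical all_reals topology normedtype sequences.
From mathcomp Require Import ring lra.
Import Order.TTheory GRing.Theory Num.Theory numFieldNormedType.Exports.
Local Open Scope classical_set_scope.
Local Open Scope ring_scope.

Set Implicit Arguments. Unset Strict Implicit.
Section S.
Variable R : realType.

Lemma Acount0 (A : set nat) : Acount A 0 = 0 :> R.
Proof. by rewrite /Acount big_geq. Qed.

Lemma AcountS (A : set nat) n :
  Acount A n.+1 = Acount A n + (n.+1 \in A)%:R :> R.
Proof. by rewrite /Acount big_nat_recr. Qed.

Lemma Acount_bnd (A : set nat) n : 0 <= Acount A n :> R /\ Acount A n <= n%:R :> R.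
Proof.
elim: n => [|n [h1 h2]]; first by rewrite Acount0.
rewrite AcountS -natr1; case: (n.+1 \in A) => /=; split; lra.
Qed.

Lemma Acount_sub (A B : set nat) n : A `<=` B -> Acount A n <= Acount B n :> R.
Proof.
move=> AB; elim: n => [|n IH]; first by rewrite !Acount0.
rewrite !AcountS; apply: lerD => //.
case: (boolP (n.+1 \in A)) => [/set_mem/AB/mem_set -> //|_].
by rewrite /= ler0n.
Qed.

Lemma Acount_lin (Z X Y : set nat) (a b c : R) :
  (forall k, (k \in Z)%:R = a * (k \in X)%:R + b * (k \in Y)%:R + c :> R) ->
  forall n, Acount Z n = a * Acount X n + b * Acount Y n + c * n%:R.
Proof.
move=> h; elim => [|n IH]; first by rewrite !Acount0; ring.
by rewrite !AcountS IH h -natr1; ring.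
Qed.

Definition approx (A : set nat) (t : R) := forall e : R, 0 < e ->
  exists M : R, forall n, `|Acount A n - t * n%:R| <= e * n%:R + M.

Lemma approx_cvg (A : set nat) t : approx A t -> dratio A @ \oo --> t.
Proof.
move=> h; apply/cvgrPdist_le => e e0.
have e20 : 0 < e / 2 by rewrite divr_gt0.
have [M HM] := h _ e20.
have M0 : 0 <= M by have := HM 0%N; rewrite Acount0 mulr0 subr0 normr0 mulr0 add0r.
exists (Num.bound (M * 2 / e)).+1 => // n /= Hn.
have n0 : (0 < n)%N by apply: leq_trans Hn.
have n0' : 0 < n%:R :> R by rewrite ltr0n.
have hb := archi_boundP (divr_ge0 (mulr_ge0 M0 (ler0n _ 2)) (ltW e0)).
have hn : M * 2 / e < n%:R.
  apply: lt_le_trans hb _; rewrite ler_nat; exact: ltnW.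
rewrite /dratio.
have -> : t - Acount A n / n%:R = - (Acount A n - t * n%:R) / n%:R.
  by field; rewrite lt0r_neq0.
rewrite normrM normrN normfV (gtr0_norm n0') ler_pdivrMr //.
apply: le_trans (HM n) _.
have : M < e / 2 * n%:R.
  by rewrite mulrC -ltr_pdivrMr // invf_div mulrA.
lra.
Qed.

Lemma approx_inD (A : set nat) t : approx A t -> inD R A /\ dens A = t.
Proof.
move=> /approx_cvg h; split; first exact: cvgP h.
exact: cvg_lim h.
Qed.

Lemma inD_approx (A : set nat) : inD R A -> approx A (dens A).
Proof.
move=> /cvgrPdist_le h e e0.
have [N _ HN] := h e e0.
exists (N%:R * (1 + `|dens A|)) => n.
have [h1 h2] := Acount_bnd A n.
have M0 : 0 <= N%:R * (1 + `|dens A|) :> R by rewrite mulr_ge0 // addr_ge0.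
case: (leqP N n) => Nn.
  case: n Nn h1 h2 => [|n] Nn h1 h2.
    by rewrite Acount0 mulr0 subr0 normr0 mulr0 add0r.
  have := HN _ Nn; rewrite /dratio => H.
  have n0' : 0 < n.+1%:R :> R by rewrite ltr0n.
  have -> : Acount A n.+1 - dens A * n.+1%:R = - (dens A - Acount A n.+1 / n.+1%:R) * n.+1%:R :> R.
    by field; rewrite addrC natr1 pnatr_eq0.
  rewrite normrM normrN (gtr0_norm n0').
  have : `|dens A - Acount A n.+1 / n.+1%:R| * n.+1%:R <= e * n.+1%:R :> R.
    by rewrite ler_pM2r.
  lra.
apply: le_trans (ler_normB _ _) _.
rewrite ger0_norm // normrM (ger0_norm (ler0n _ n)).
have nN : n%:R <= N%:R :> R by rewrite ler_nat ltnW.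
have : 0 <= e * n%:R by rewrite mulr_ge0 // ltW.
have : `|dens A| * n%:R <= `|dens A| * N%:R :> R by rewrite ler_wpM2l.
nra.
Qed.

Lemma approx_lin (Z X Y : set nat) (a b c x y : R) :
  (forall k, (k \in Z)%:R = a * (k \in X)%:R + b * (k \in Y)%:R + c :> R) ->
  approx X x -> approx Y y -> approx Z (a * x + b * y + c).
Proof.
move=> hk hX hY e e0.
have d0 : 0 < `|a| + `|b| + 1 by rewrite ltr_wpDl // addr_ge0.
have e'0 : 0 < e / (`|a| + `|b| + 1) by rewrite divr_gt0.
have [M1 H1] := hX _ e'0; have [M2 H2] := hY _ e'0.
exists (`|a| * M1 + `|b| * M2) => n.
rewrite (Acount_lin hk).
set e' := e / (`|a| + `|b| + 1).
have -> : a * Acount X n + b * Acount Y n + c * n%:R - (a * x + b * y + c) * n%:R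
  = a * (Acount X n - x * n%:R) + b * (Acount Y n - y * n%:R) by ring.
apply: le_trans (ler_normD _ _) _; rewrite !normrM.
have h1 := ler_wpM2l (normr_ge0 a) (H1 n).
have h2 := ler_wpM2l (normr_ge0 b) (H2 n).
have he : (`|a| + `|b|) * e' <= e.
  rewrite /e' mulrA ler_pdivrMr //; nra.
have n0 : 0 <= n%:R :> R by [].
have : `|a| * (e' * n%:R) + `|b| * (e' * n%:R) <= e * n%:R.
  by rewrite !mulrA -!mulrDl; apply: ler_wpM2r => //; rewrite -mulrA.
rewrite /e' !mulrDr in h1 h2 *; lra.
Qed.

Lemma approx0 : approx set0 0.
Proof.
move=> e e0; exists 0 => n.
have -> : Acount set0 n = 0 :> R.
  by rewrite (@Acount_lin set0 set0 set0 0 0 0) ?mul0r ?addr0 // => k; rewrite in_set0 mul0r !addr0.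
by rewrite mul0r subr0 normr0 addr0 mulr_ge0 // ltW.
Qed.

Lemma approxT : approx setT 1.
Proof.
move=> e e0; exists 0 => n.
have -> : Acount setT n = n%:R :> R.
  by rewrite (@Acount_lin setT set0 set0 0 0 1) ?mul0r ?add0r ?mul1r // => k; rewrite in_setT mul0r !add0r.
by rewrite mul1r subrr normr0 addr0 mulr_ge0 // ltW.
Qed.

Lemma approx_le (B X : set nat) b x : B `<=` X -> approx B b -> approx X x -> b <= x.
Proof.
move=> BX hB hX; rewrite leNgt; apply/negP => xb.
have e0 : 0 < (b - x) / 4 by rewrite divr_gt0 // subr_gt0.
have [M1 H1] := hB _ e0; have [M2 H2] := hX _ e0.
have M10 : 0 <= M1 by have := H1 0%N; rewrite Acount0 mulr0 subr0 normr0 mulr0 add0r.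
have M20 : 0 <= M2 by have := H2 0%N; rewrite Acount0 mulr0 subr0 normr0 mulr0 add0r.
have q0 : 0 <= (M1 + M2) * 2 / (b - x).
  by apply: divr_ge0; [rewrite mulr_ge0 ?addr_ge0 | rewrite subr_ge0 ltW].
have hb := archi_boundP q0.
set n := Num.bound _ in hb.
have := H1 n; have := H2 n; have := Acount_sub n BX.
move: hb; rewrite ltr_pdivrMr ?subr_gt0 // => hb.
move=> hs /ler_normlP [h2 h2'] /ler_normlP [h1 h1'].
nra.
Qed.

Lemma approx_M0 (A : set nat) (t e M : R) : (forall n, `|Acount A n - t * n%:R| <= e * n%:R + M) -> 0 <= M.
Proof. by move=> H; have := H 0%N; rewrite Acount0 mulr0 subr0 normr0 mulr0 add0r. Qed.

Fixpoint gcnt (X : set nat) (t : R) (n : nat) : nat :=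
  if n is n'.+1 then gcnt X t n' + ((n'.+1 \in X) && ((gcnt X t n')%:R < t * n'.+1%:R))
  else 0%N.

Definition gset (X : set nat) (t : R) : set nat :=
  [set k | (k \in X) && ((gcnt X t k.-1)%:R < t * k%:R)].

Lemma in_gset X (t : R) k : (k \in gset X t) = (k \in X) && ((gcnt X t k.-1)%:R < t * k%:R).
Proof. by apply/idP/idP => [/set_mem //| h]; apply: mem_set. Qed.

Lemma Acount_gset X (t : R) n : Acount (gset X t) n = (gcnt X t n)%:R :> R.
Proof.
elim: n => [|n IH]; first by rewrite Acount0.
by rewrite AcountS IH in_gset /= natrD.
Qed.

Lemma gset_sub X t : gset X t `<=` X.
Proof. by move=> k /= /andP [/set_mem]. Qed.

Lemma gcnt_up X t n : 0 <= t -> (gcnt X t n)%:R <= t * n%:R + 1.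
Proof.
move=> t0; elim: n => [|n IH] /=; first by rewrite mulr0 add0r.
rewrite natrD -natr1.
case: (n.+1 \in X) => /=; last first.
  rewrite addr0; have : t * n%:R <= t * n%:R + t by lra.
  by rewrite mulrDr mulr1; lra.
case: ltP => h /=; rewrite mulrDr mulr1 in h *; lra.
Qed.

Lemma gcnt_inv X t n : exists2 m, (m <= n)%N &
  Acount X n + t * m%:R <= (gcnt X t n)%:R + Acount X m.
Proof.
elim: n => [|n [m mn IH]] /=; first by exists 0%N => //; rewrite Acount0 mulr0; lra.
rewrite AcountS natrD.
case: (boolP (n.+1 \in X)) => hX /=; last first.
  by exists m; [exact: leqW | rewrite addr0; lra].
case: ltP => h /=.
  by exists m; [exact: leqW | lra].
by exists n.+1 => //; rewrite AcountS hX /=; lra.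
Qed.

Lemma mono_step (f : nat -> R) : (forall k, f k <= f k.+1) -> forall m n, (m <= n)%N -> f m <= f n.
Proof.
move=> h m; elim => [|n IH]; first by rewrite leqn0 => /eqP ->.
rewrite leq_eqVlt => /orP [/eqP -> //| ]; rewrite ltnS => /IH hm.
exact: le_trans hm (h n).
Qed.

Lemma indb (b : bool) : 0 <= b%:R :> R /\ b%:R <= 1 :> R.
Proof. by case: b => /=; split; lra. Qed.

Lemma Klem (E C : set nat) (e c : R) : approx E e -> approx C c ->
  exists G g, [/\ G `<=` E `&` ~` C, approx G g & e - c <= g].
Proof.
move=> hE hC.
case: (lerP (e - c) 0) => tle.
  by exists set0, 0; split => //; apply: approx0.
have e1 : e <= 1 by apply: approx_le hE approxT.
have c0 : 0 <= c by apply: approx_le (@sub0set _ C) approx0 hC.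
pose X := E `&` ~` C.
exists (gset X (e - c)), (e - c); split => //; first exact: gset_sub.
pose f k : R := Acount X k - Acount E k + Acount C k.
have fmono : forall m n, (m <= n)%N -> f m <= f n.
  apply: mono_step => k; rewrite /f !AcountS /X in_setI in_setC.
  by case: (k.+1 \in E); case: (k.+1 \in C) => /=; lra.
move=> eps eps0.
have e40 : 0 < eps / 4 by rewrite divr_gt0.
have [ME HE] := hE _ e40; have [MC HC] := hC _ e40.
have ME0 := approx_M0 HE; have MC0 := approx_M0 HC.
exists (2 * ME + 2 * MC + 1) => n.
have [m mn Hm] := gcnt_inv X (e - c) n.
rewrite Acount_gset.
have up := gcnt_up X n (ltW tle).
have fmn := fmono _ _ mn; rewrite /f in fmn.
have /ler_normlP [hE1 hE2] := HE n; have /ler_normlP [hE3 hE4] := HE m.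
have /ler_normlP [hC1 hC2] := HC n; have /ler_normlP [hC3 hC4] := HC m.
have mn' : eps / 4 * m%:R <= eps / 4 * n%:R by apply: ler_wpM2l; [exact: ltW | rewrite ler_nat].
have h4 : eps * n%:R = 4 * (eps / 4 * n%:R) by field.
have hn0 : 0 <= eps / 4 * n%:R by apply: mulr_ge0; [exact: ltW|].
rewrite !mulrBl in Hm up *.
apply/ler_normlP; split; lra.
Qed.

Lemma approx_inDP (B : set nat) : inD R B -> approx B (dens B).
Proof. exact: inD_approx. Qed.

Lemma ldd_ge (X B : set nat) b : B `<=` X -> approx B b -> b <= ldd X :> R.
Proof.
move=> BX hB; have [iB dB] := approx_inD hB.
apply: ub_le_sup; last by exists B; rewrite dB.
exists 1 => _ [B' [B'X [iB' ->]]].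
exact: approx_le (@subsetT _ B') (inD_approx iB') approxT.
Qed.

Lemma ldd_le (X : set nat) (y : R) :
  (forall B b, B `<=` X -> approx B b -> b <= y) -> ldd X <= y.
Proof.
move=> h; apply: ge_sup.
  have [i d] := approx_inD approx0.
  by exists 0, set0; split => //; split => //; rewrite d.
by move=> _ [B [BX [iB ->]]]; apply: h BX (inD_approx iB).
Qed.

Lemma udd_le (X C : set nat) c : X `<=` C -> approx C c -> udd X <= c :> R.
Proof.
move=> XC hC; have [iC dC] := approx_inD hC.
apply: ge_inf; last by exists C; rewrite dC.
exists 0 => _ [C' [XC' [iC' ->]]].
exact: approx_le (@sub0set _ C') approx0 (inD_approx iC').
Qed.

Lemma udd_ge (X : set nat) (y : R) :
  (forall C c, X `<=` C -> approx C c -> y <= c) -> y <= udd X.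
Proof.
move=> h; apply: lb_le_inf.
  have [i d] := approx_inD approxT.
  by exists 1, setT; split => //; split => //; rewrite d.
by move=> _ [C [XC [iC ->]]]; apply: h XC (inD_approx iC).
Qed.
End S.

Theorem proposition3p11 (R : realType) (A B : set nat) :
  A `&` B = set0 ->
  (ldd A + ldd B <= ldd (A `|` B) :> R /\
   ldd (A `|` B) <= ldd A + udd B :> R /\
   ldd A + udd B <= udd (A `|` B) :> R /\
   udd (A `|` B) <= udd A + udd B :> R) /\
  (inD R (A `|` B) -> dens (A `|` B) = ldd A + udd B :> R) /\
  (inD R A -> udd (A `|` B) = dens A + udd B :> R).
Proof.
move=> AB.
have disj : forall k, A k -> B k -> False.
  by move=> k Ak Bk; have : (A `&` B) k by []; rewrite AB.
have h1 : ldd A + ldd B <= ldd (A `|` B) :> R.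
  suff : ldd B <= ldd (A `|` B) - ldd A :> R by lra.
  apply: ldd_le => B2 b2 B2B hb2.
  suff : ldd A <= ldd (A `|` B) - b2 :> R by lra.
  apply: ldd_le => B1 b1 B1A hb1.
  suff : b1 + b2 <= ldd (A `|` B) :> R by lra.
  have := @approx_lin R (B1 `|` B2) B1 B2 1 1 0 b1 b2.
  rewrite !mul1r addr0 => H; apply: (ldd_ge _ (H _ hb1 hb2)).
    by move=> k [/B1A|/B2B] h; [left|right].
  move=> k; rewrite in_setU !mul1r addr0.
  case: (boolP (k \in B1)) => [k1|k1]; case: (boolP (k \in B2)) => [k2|k2] /=.
  - by case: (disj _ (B1A _ (set_mem k1)) (B2B _ (set_mem k2))).
  - by rewrite addr0.
  - by rewrite add0r.
  - by rewrite addr0.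
have h2 : ldd (A `|` B) <= ldd A + udd B :> R.
  apply: ldd_le => E e EAB hE.
  suff : e - ldd A <= udd B by lra.
  apply: udd_ge => C c BC hC.
  have [G [g [GEC hG hg]]] := Klem hE hC.
  have : g <= ldd A.
    apply: ldd_ge hG => k /GEC [/EAB [//|/BC ?] ?]; by [].
  lra.
have h3 : ldd A + udd B <= udd (A `|` B) :> R.
  apply: udd_ge => C c ABC hC.
  suff : ldd A <= c - udd B by lra.
  apply: ldd_le => B1 b1 B1A hb1.
  suff : udd B <= c - b1 by lra.
  have := @approx_lin R (C `\` B1) C B1 1 (-1) 0 c b1.
  rewrite mul1r addr0 mulN1r => H; apply: (udd_le _ (H _ hC hb1)).
    move=> k Bk; split; first by apply: ABC; right.
    by move/B1A => Ak; apply: disj Ak Bk.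
  move=> k; rewrite in_setD mul1r addr0 mulN1r.
  case: (boolP (k \in B1)) => [k1|_]; case: (boolP (k \in C)) => [kC|kC] //=.
  - by rewrite subrr.
  - by move: kC; rewrite (mem_set (ABC k (or_introl (B1A _ (set_mem k1))))).
  - by rewrite subr0.
  - by rewrite subr0.
have h4 : udd (A `|` B) <= udd A + udd B :> R.
  suff : udd (A `|` B) - udd B <= udd A :> R by lra.
  apply: udd_ge => C1 c1 AC1 hC1.
  suff : udd (A `|` B) - c1 <= udd B :> R by lra.
  apply: udd_ge => C2 c2 BC2 hC2.
  have hN : approx (~` C1) (- 1 * c1 + 0 * c1 + 1).
    refine (approx_lin _ hC1 hC1) => k; rewrite in_setC.
    by case: (k \in C1) => /=; ring.
  rewrite mul0r addr0 mulN1r in hN.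
  have [G [g [GEC hG hg]]] := Klem hN hC2.
  have hNG : approx (~` G) (- 1 * g + 0 * g + 1).
    refine (approx_lin _ hG hG) => k; rewrite in_setC.
    by case: (k \in G) => /=; ring.
  rewrite mul0r addr0 mulN1r in hNG.
  have : udd (A `|` B) <= - g + 1.
    apply: (udd_le _ hNG) => k [/AC1 k1|/BC2 k2] /GEC [h h'] //.
  lra.
split; first by [].
have selfl : forall X : set nat, inD R X -> ldd X = dens X :> R.
  move=> X iX; apply/le_anti/andP; split.
    by apply: ldd_le => B' b' B'X hb'; apply: approx_le B'X hb' (inD_approx iX).
  exact: ldd_ge (inD_approx iX).
have selfu : forall X : set nat, inD R X -> udd X = dens X :> R.
  move=> X iX; apply/le_anti/andP; split.
    exact: udd_le (inD_approx iX).
  by apply: udd_ge => C' c' XC' hc'; apply: approx_le XC' (inD_approx iX) hc'.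
split.
  move=> iAB; have := selfl _ iAB; have := selfu _ iAB; lra.
move=> iA; have := selfl _ iA; have := selfu _ iA; lra.
Qed.
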